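(* The symmetric precubical set of labels $\mathrm{sh}_{\square_S}\mathcal{L}_{\square_S}(!\Sigma)$ is isomorphic to the following symmetric precubical set $!^S\Sigma$: $(!^S\Sigma)_0=\{()\}$ (the empty word); $(!^S\Sigma)_n=\Sigma^n$ for $n\ge1$; $\partial_i^0(a_1,\dots,a_n)=\partial_i^1(a_1,\dots,a_n)=(a_1,\dots,\widehat{a_i},\dots,a_n)$ (the letter $a_i$ removed); and $s_i(a_1,\dots,a_n)=(a_1,\dots,a_{i-1},a_{i+1},a_i,a_{i+2},\dots,a_n)$ for $1\le i\le n-1$.
   Context: $[0]=\{()\}$, $[n]=\{0,1\}^n$ ($n\ge1$) with the product order; ${\rm PoSet}$: posets with strictly increasing maps. Face maps $\delta_i^\alpha:[n-1]\to[n]$ insert $\alpha$ at position $i$; $\square$ is the subcategory of ${\rm PoSet}$ with objects $[n]$, $n\ge0$, generated by face maps; its presheaves are precubical sets. Symmetry maps $\sigma_i:[n]\to[n]$ ($n\ge2$, $1\le i\le n-1$) swap coordinates $i$ and $i+1$. $\square_S$ is the subcategory of ${\rm PoSet}$ with objects $[n]$ generated by the face maps and the symmetry maps; its presheaves are symmetric precubical sets, with $\partial_i^\alpha=(\delta_i^\alpha)^*$ and $s_i=(\sigma_i)^*$. $\square_S[p]=\square_S(-,[p])$ and $\partial\square_S[p]$ is its subpresheaf of cubes of dimension $<p$. $\mathcal L_{\square_S}$ is the left adjoint of restriction from symmetric precubical sets to precubical sets. $\Sigma$ is a non-empty set; $!\Sigma$ is the precubical set with $(!\Sigma)_0=\{()\}$,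 $(!\Sigma)_n=\Sigma^n$, $\partial_i^0=\partial_i^1$ deleting the $i$-th letter. $\mathrm{sh}_{\square_S}$ is the left adjoint of the inclusion of the full subcategory of symmetric precubical sets orthogonal to the maps $\square_S[p]\sqcup_{\partial\square_S[p]}\square_S[p]\to\square_S[p]$, $p\ge2$. *)

(* Defs.v *)
From mathcomp Require Import all_boot.
From Stdlib Require Import ProofIrrelevance.
Set Implicit Arguments. Unset Strict Implicit. Unset Printing Implicit Defensive.

Definition cube n := n.-tuple bool.

(* Words / tuples; indices are 0-based (paper's index i is our i-1). *)
Definition tup (T : Type) n := n.-tuple T.

Definition del (T : Type) n (w : n.+1.-tuple T) (i : 'I_n.+1) : n.-tuple T :=
  [tuple tnth w (lift i j) | j < n].

Definition swapidx (i j : nat) : nat :=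
  if j == i then i.+1 else if j == i.+1 then i else j.

Definition swapw (T : Type) n (w : n.+2.-tuple T) (i : 'I_n.+1) : n.+2.-tuple T :=
  [tuple tnth w (inord (swapidx i j)) | j < n.+2].

Definition face n (i : 'I_n.+1) (a : bool) (x : cube n) : cube n.+1 :=
  [tuple (if (j < i)%N then nth false x j
          else if (j : nat) == i then a else nth false x j.-1) | j < n.+1].

Definition swapc n (i : 'I_n.+1) (x : cube n.+2) : cube n.+2 := swapw x i.

(* The maps of the subcategory of PoSet generated by the face maps
   (sym = false: the category box) or by the face and symmetry maps
   (sym = true: the category box_S). *)
Unset Implicit Arguments.
Inductive gen (sym : bool) (m : nat) : forall n, (cube m -> cube n) -> Prop :=
| gen_id : gen sym m m id
| gen_face n (i : 'I_n.+1) (a : bool) f :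
    gen sym m n f -> gen sym m n.+1 (face i a \o f)
| gen_sym n (i : 'I_n.+1) f :
    sym -> gen sym m n.+2 f -> gen sym m n.+2 (swapc i \o f).
Set Implicit Arguments.
Arguments gen_face {sym m n} i a {f}.
Arguments gen_sym {sym m n} i {f}.

Lemma gen_comp sym m n p (f : cube m -> cube n) (g : cube n -> cube p) :
  gen sym m n f -> gen sym n p g -> gen sym m p (g \o f).
Proof.
move=> Hf Hg; elim: Hg => [|q i a h _ IH|q i h Hs _ IH].
- exact: Hf.
- exact: (gen_face i a IH).
- exact: (gen_sym i Hs IH).
Qed.

Lemma gen_incl m n f : gen false m n f -> gen true m n f.
Proof.
elim=> [|q i a h _ IH|q i h Hs _ IH].
- exact: gen_id.
- exact: gen_face.
- by [].
Qed.

Definition hom (sym : bool) m n := {f : cube m -> cube n | gen sym m n f}.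

Definition hid sym n : hom sym n n := exist _ id (gen_id sym n).

Definition hcomp sym m n p (f : hom sym m n) (g : hom sym n p) : hom sym m p :=
  exist _ (proj1_sig g \o proj1_sig f) (gen_comp (proj2_sig f) (proj2_sig g)).

Definition hface sym n (i : 'I_n.+1) (a : bool) : hom sym n n.+1 :=
  exist _ (face i a \o id) (gen_face i a (gen_id sym n)).

Definition hsym n (i : 'I_n.+1) : hom true n.+2 n.+2 :=
  exist _ (swapc i \o id) (gen_sym i isT (gen_id true n.+2)).

Definition hincl m n (f : hom false m n) : hom true m n :=
  exist _ (proj1_sig f) (gen_incl (proj2_sig f)).

Lemma hom_eq sym m n (f g : hom sym m n) : proj1_sig f = proj1_sig g -> f = g.
Proof.
case: f => f Hf; case: g => g Hg /= E; subst g.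
by rewrite (proof_irrelevance _ Hf Hg).
Qed.

(* A presheaf on box (sym = false: precubical set) or on box_S
   (sym = true: symmetric precubical set), with carrier X. *)
Record psh_on (sym : bool) (X : nat -> Type) := PshOn {
  act : forall m n, hom sym m n -> X n -> X m;
  act_id : forall n (x : X n), act (hid sym n) x = x;
  act_comp : forall m n p (f : hom sym m n) (g : hom sym n p) (x : X p),
      act (hcomp f g) x = act f (act g x) }.
Arguments act {sym X} _ {m n} f x.

Definition is_morph sym X Y (PX : psh_on sym X) (PY : psh_on sym Y)
  (h : forall n, X n -> Y n) : Prop :=
  forall m n (f : hom sym m n) (x : X n), h m (act PX f x) = act PY f (h n x).

Definition res X (P : psh_on true X) : psh_on false X.
Proof.
refine (@PshOn false X (fun m n f x => act P (hincl f) x) _ _).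
- move=> n x /=.
  have -> : hincl (hid false n) = hid true n by apply: hom_eq.
  exact: act_id.
- move=> m n p f g x /=.
  have -> : hincl (hcomp f g) = hcomp (hincl f) (hincl g) by apply: hom_eq.
  exact: act_comp.
Defined.

Definition yon p : psh_on true (fun n => hom true n p).
Proof.
refine (@PshOn true (fun n => hom true n p) (fun m n f g => hcomp f g) _ _).
- by move=> n x; apply: hom_eq.
- by move=> m n q f g x; apply: hom_eq.
Defined.

(* Y is orthogonal to the codiagonal
     box_S[p] \sqcup_{\partial box_S[p]} box_S[p] -> box_S[p].
   A map out of the pushout is a pair (u,v) of maps box_S[p] -> Y agreeing
   on the subpresheaf \partial box_S[p] of cubes of dimension < p; its
   composite with the codiagonal from w : box_S[p] -> Y is the pair (w,w). *)
Definition orth_codiag Y (PY : psh_on true Y) (p : nat) : Prop :=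
  forall u v : (forall n, hom true n p -> Y n),
    is_morph (yon p) PY u -> is_morph (yon p) PY v ->
    (forall n (f : hom true n p), (n < p)%N -> u n f = v n f) ->
    exists! w : (forall n, hom true n p -> Y n),
      is_morph (yon p) PY w /\ w = u /\ w = v.

(* objects of the full subcategory used to define sh_{box_S} *)
Definition is_sheaf Y (PY : psh_on true Y) : Prop :=
  forall p, (2 <= p)%N -> orth_codiag PY p.

(* (S, eta) is a universal arrow from the precubical set K to the
   composite right adjoint (restriction o inclusion); i.e. S together with
   eta is (a model of) sh_{box_S} L_{box_S} K, which is determined up to
   unique isomorphism by this property. *)
Definition reflects X S (PK : psh_on false X) (PS : psh_on true S)
  (eta : forall n, X n -> S n) : Prop :=
  [/\ is_morph PK (res PS) eta,
      is_sheaf PS &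
      forall Y (PY : psh_on true Y), is_sheaf PY ->
        forall g : (forall n, X n -> Y n), is_morph PK (res PY) g ->
        exists! h : (forall n, S n -> Y n),
          is_morph PS PY h /\ (forall n x, h n (eta n x) = g n x)].

Definition bang_faces (T : Type) sym (P : psh_on sym (tup T)) : Prop :=
  forall n (i : 'I_n.+1) (a : bool) (w : tup T n.+1),
    act P (@hface sym n i a) w = del w i.

Definition bang_syms (T : Type) (P : psh_on true (tup T)) : Prop :=
  forall n (i : 'I_n.+1) (w : tup T n.+2), act P (@hsym n i) w = swapw w i.

(* Main.v *)
Require Import Defs.
From mathcomp Require Import all_boot zify.
From Stdlib Require Import FunctionalExtensionality ProofIrrelevance.
Set Implicit Arguments. Unset Strict Implicit. Unset Printing Implicit Defensive.

Ltac destr_if := match goal with |- context [if ?c then _ else _] =>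
  lazymatch c with
  | context [if _ then _ else _] => fail
  | true => fail | false => fail
  | _ => let E := fresh "E" in case E: (c); cbv beta iota end end.

Ltac fin := first [ reflexivity | (congr (nth _ _ _); lia) | (exfalso; lia) ].

Lemma swapidxK i j : swapidx i (swapidx i j) = j.
Proof. rewrite /swapidx; repeat destr_if; lia. Qed.

Lemma swapidx_lt n i j : i < n.+1 -> j < n.+2 -> swapidx i j < n.+2.
Proof. rewrite /swapidx => *; repeat destr_if; lia. Qed.

Lemma tuple_nth_eq n (x y : n.-tuple bool) :
  (forall l, l < n -> nth false x l = nth false y l) -> x = y.
Proof.
move=> H; apply: val_inj; apply: (eq_from_nth (x0:=false)); first by rewrite !size_tuple.
by move=> l; rewrite size_tuple; apply: H.
Qed.

Lemma nth_face n (i : 'I_n.+1) a (x : cube n) l :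
  nth false (face i a x) l =
  if l < i then nth false x l else if l == i then a else nth false x l.-1.
Proof.
have [Hl|Hl] := ltnP l n.+1.
  by rewrite (_ : l = Ordinal Hl) // -tnth_nth tnth_mktuple.
have := ltn_ord i.
rewrite nth_default ?size_tuple //; case: ifP => H1; first lia.
case: ifP => H2; first lia.
by rewrite nth_default // size_tuple; lia.
Qed.

Lemma nth_swapc n (i : 'I_n.+1) (y : cube n.+2) l :
  nth false (swapc i y) l = nth false y (swapidx i l).
Proof.
have [Hl|Hl] := ltnP l n.+2.
  rewrite (_ : l = Ordinal Hl) // -tnth_nth tnth_mktuple (tnth_nth false) /=.
  by rewrite inordK // swapidx_lt.
have := ltn_ord i => Hi.
rewrite nth_default ?size_tuple // nth_default // size_tuple.
move: Hl Hi; rewrite /swapidx => *; repeat destr_if; lia.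
Qed.
Definition copy m n (f : cube m -> cube n) j k :=
  forall x, nth false (f x) j = nth false x k.

Definition Inv m n (f : cube m -> cube n) :=
  (forall k, k < m -> exists2 j, j < n & copy f j k) /\
  (forall j j' k, j < n -> j' < n -> k < m -> copy f j k -> copy f j' k -> j = j').

Lemma gen_Inv sym m n f : gen sym m n f -> Inv f.
Proof.
elim=> [|n' i a f0 _ [IE IU]|n' i f0 _ _ [IE IU]].
- split; first by move=> k Hk; exists k.
  move=> j j' k Hj Hj' Hk C1 C2.
  have T : forall l, l < m -> exists x : cube m, forall l', l' < m -> nth false x l' = (l' == l).
    move=> l Hl; exists [tuple ((val l') == l) | l' < m] => l' Hl'.
    by rewrite (_ : l' = Ordinal Hl') // -tnth_nth tnth_mktuple.
  have [x Hx] := T j Hj; have [y Hy] := T j' Hj'.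
  have := C1 x; have := C2 y; rewrite /= Hx // Hy // Hx // Hy //.
  by rewrite !eqxx; case: eqP => // <-; case: eqP.
- have cf : forall j k, j < n'.+1 -> k < m -> copy (face i a \o f0) j k ->
     (j < i /\ copy f0 j k) \/ (i < j /\ copy f0 j.-1 k).
    move=> j k Hj Hk C.
    have [lt|gt|eq] := ltngtP j i.
    + left; split=> // x; by have := C x; rewrite /= nth_face lt.
    + right; split=> // x; have := C x; rewrite /= nth_face.
      by rewrite ltnNge (ltnW gt) /= (gtn_eqF gt).
    + exfalso; have := C (nseq_tuple m (~~ a)); rewrite /= nth_face eq ltnn eqxx nth_nseq Hk.
      by clear C; case: a.
  split.
  + move=> k Hk; have [j Hj C] := IE k Hk.
    have [lt|ge] := ltnP j i.
    * exists j; first lia. by move=> x; rewrite /= nth_face lt; apply: C.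
    * exists j.+1; first lia. move=> x; rewrite /= nth_face.
      have -> : (j.+1 < i) = false by lia.
      have -> : (j.+1 == i) = false by lia.
      by apply: C.
  + move=> j j' k Hj Hj' Hk C1 C2.
    have := ltn_ord i => Hi.
    case: (cf j k Hj Hk C1) => [[l1 D1]|[l1 D1]];
    case: (cf j' k Hj' Hk C2) => [[l2 D2]|[l2 D2]].
    * by apply: (IU j j' k) => //; lia.
    * have := IU j j'.-1 k ltac:(lia) ltac:(lia) Hk D1 D2; lia.
    * have := IU j.-1 j' k ltac:(lia) ltac:(lia) Hk D1 D2; lia.
    * have := IU j.-1 j'.-1 k ltac:(lia) ltac:(lia) Hk D1 D2; lia.
- have cs : forall j k, copy (swapc i \o f0) j k -> copy f0 (swapidx i j) k.
    by move=> j k C x; rewrite -C /= nth_swapc.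
  have := ltn_ord i => Hi.
  split.
  + move=> k Hk; have [j Hj C] := IE k Hk.
    exists (swapidx i j); first exact: swapidx_lt.
    by move=> x; rewrite /= nth_swapc swapidxK; apply: C.
  + move=> j j' k Hj Hj' Hk C1 C2.
    rewrite -(swapidxK i j) -(swapidxK i j'); congr swapidx.
    apply: (IU _ _ k) => //; try exact: swapidx_lt; exact: cs.
Qed.

Definition bact (T : Type) (s0 : T) m n (f : cube m -> cube n) (w : tup T n) : tup T m :=
  [tuple (match [pick j : 'I_n | [forall x : m.-tuple bool, nth false (f x) j == nth false x k]]
          with Some j => tnth w j | None => s0 end) | k < m].

Lemma bact_tnth T (s0 : T) m n (f : cube m -> cube n) (w : tup T n) (k : 'I_m) (j : 'I_n) :
  Inv f -> copy f j k -> tnth (bact s0 f w) k = tnth w j.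
Proof.
move=> [_ IU] C; rewrite tnth_mktuple.
case: pickP => [j' /forallP H|H]; last first.
  by have := H j; move/negP; case; apply/forallP => x; apply/eqP; apply: C.
congr tnth; apply: val_inj; apply: (IU j' j k (ltn_ord j') (ltn_ord j) (ltn_ord k)) => //.
by move=> x; apply/eqP; apply: H.
Qed.

Definition bangS (T : Type) (s0 : T) : psh_on true (tup T).
Proof.
refine (@PshOn true (tup T) (fun m n f w => bact s0 (proj1_sig f) w) _ _).
- move=> n x /=; apply: eq_from_tnth => k.
  by rewrite (@bact_tnth _ _ _ _ _ _ _ (k)) //; apply: (gen_Inv (gen_id true n)).
- move=> m n p [f Hf] [g Hg] x /=; apply: eq_from_tnth => k.
  have [IEf _] := gen_Inv Hf; have [IEg _] := gen_Inv Hg.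
  have [j Hj Cf] := IEf k (ltn_ord k).
  have [l Hl Cg] := IEg j Hj.
  rewrite (@bact_tnth _ _ _ _ f _ _ (Ordinal Hj)); [|exact: gen_Inv Hf|by []].
  rewrite (@bact_tnth _ _ _ _ g _ _ (Ordinal Hl)); [|exact: gen_Inv Hg|by []].
  rewrite (@bact_tnth _ _ _ _ (g \o f) _ _ (Ordinal Hl)); [by []|exact: gen_Inv (gen_comp Hf Hg)|].
  by move=> y /=; rewrite Cg Cf.
Defined.

Lemma bangS_faces T (s0 : T) : bang_faces (bangS s0).
Proof.
move=> n i a w /=; apply: eq_from_tnth => k.
rewrite (@bact_tnth _ _ _ _ _ _ _ (lift i k)); [by rewrite tnth_mktuple|exact: (gen_Inv (proj2_sig (hface true i a)))|].
move=> x /=; rewrite nth_face /= /bump.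
have := ltn_ord i; have := ltn_ord k => *.
repeat destr_if; fin.
Qed.

Lemma bangS_syms T (s0 : T) : bang_syms (bangS s0).
Proof.
move=> n i w /=; apply: eq_from_tnth => k.
have Hs : swapidx i k < n.+2 by apply: swapidx_lt.
rewrite (@bact_tnth _ _ _ _ _ _ _ (inord (swapidx i k))); [by rewrite tnth_mktuple|exact: (gen_Inv (proj2_sig (hsym i)))|].
by move=> x /=; rewrite inordK // nth_swapc swapidxK.
Qed.

Lemma comm_hom n (i : 'I_n.+1) (j : 'I_n.+2) a (Q : forall q, hom true q q -> Prop) :
  Q n.+1 (hid true n.+1) -> (forall q (i' : 'I_q.+1), q.+1 = n -> Q q.+2 (@hsym q i')) ->
  exists (j' : 'I_n.+2) (H : hom true n.+1 n.+1),
    Q n.+1 H /\ hcomp (@hface true n.+1 j a) (@hsym n i) = hcomp H (@hface true n.+1 j' a).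
Proof.
move=> Qid Qs.
have Hi := ltn_ord i; have Hj := ltn_ord j.
have : (j < i \/ (j : nat) = i \/ (j : nat) = i.+1 \/ i.+1 < j) by lia.
case=> [lt|[eq|[eq|gt]]].
- move: i j Hi Hj lt Qs Qid; case: n => [|n] i j Hi Hj lt Qs Qid; first lia.
  exists j, (@hsym n (inord i.-1)); split; first exact: Qs.
  apply: hom_eq; apply: functional_extensionality => x /=.
  apply: tuple_nth_eq => l _.
  rewrite nth_swapc !nth_face nth_swapc nth_swapc inordK; last lia.
  rewrite /swapidx; repeat destr_if; fin.
- exists (inord i.+1), (hid true n.+1); split=> //.
  apply: hom_eq; apply: functional_extensionality => x /=.
  apply: tuple_nth_eq => l _.
  rewrite nth_swapc !nth_face inordK; last lia.
  rewrite /swapidx; repeat destr_if; fin.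
- exists (inord i), (hid true n.+1); split=> //.
  apply: hom_eq; apply: functional_extensionality => x /=.
  apply: tuple_nth_eq => l _.
  rewrite nth_swapc !nth_face inordK; last lia.
  rewrite /swapidx; repeat destr_if; fin.
- move: i j Hi Hj gt Qs Qid; case: n => [|n] i j Hi Hj gt Qs Qid; first lia.
  exists j, (@hsym n (inord i)); split; first exact: Qs.
  apply: hom_eq; apply: functional_extensionality => x /=.
  apply: tuple_nth_eq => l _.
  rewrite nth_swapc !nth_face nth_swapc nth_swapc inordK; last lia.
  rewrite /swapidx; repeat destr_if; fin.
Qed.

Definition FactP m p : (cube m -> cube p) -> Prop :=
  match p return (cube m -> cube p) -> Prop with
  | 0 => fun _ => True
  | n.+1 => fun f => m < n.+1 -> exists (j : 'I_n.+1) a f',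
              gen true m n f' /\ f =1 face j a \o f'
  end.

Lemma gen_fact m p f (G : gen true m p f) : FactP f.
Proof.
elim: G => [|n i a f0 H0 _|n i f0 _ H0 IH].
- clear; by case: m => //= n; rewrite ltnn.
- by move=> _; exists i, a, f0.
- move=> /= Hm; have [j [a [f1 [G1 E1]]]] := IH Hm.
  have [j' [H [_ E]]] := @comm_hom n i j a (fun _ _ => True) I (fun _ _ _ => I).
  exists j', a, (proj1_sig H \o f1); split; first exact: gen_comp G1 (proj2_sig H).
  move=> x /=; rewrite E1 /=.
  by have := f_equal (fun F => proj1_sig F (f1 x)) E.
Qed.

Lemma hfact k n (f : hom true k n.+1) : k < n.+1 ->
  exists (j : 'I_n.+1) a (f' : hom true k n), f = hcomp f' (@hface true n j a).
Proof.
case: f => f Hf Hk; have := gen_fact Hf; move=> /= /(_ Hk) [j [a [f' [G E]]]].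
exists j, a, (exist _ f' G); apply: hom_eq => /=.
by apply: functional_extensionality => x; rewrite E.
Qed.

Lemma del_inj T q (x y : tup T q.+2) : (forall i, del x i = del y i) -> x = y.
Proof.
move=> H; apply: eq_from_tnth => k.
pose i : 'I_q.+2 := if (k : nat) == 0 then inord 1 else inord 0.
have ne : i != k.
  rewrite /i; case E0: ((k : nat) == 0); apply/eqP => E; have := f_equal val E; rewrite /= inordK //; lia.
case: (unliftP i k) ne => [j ->|->]; last by rewrite eqxx.
move=> _; have := f_equal (fun t => tnth t j) (H i).
by rewrite !tnth_mktuple.
Qed.

Theorem proposition11p3 (Sigma : Type) (hne : inhabited Sigma) :
  (exists PK : psh_on false (tup Sigma), bang_faces PK) /\
  forall PK : psh_on false (tup Sigma), bang_faces PK ->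
    exists PS : psh_on true (tup Sigma),
      bang_faces PS /\ bang_syms PS /\
      exists eta : (forall n, tup Sigma n -> tup Sigma n), reflects PK PS eta.
Proof.
case: hne => s0.
split.
  exists (res (bangS s0)) => n i a w.
  change (act (bangS s0) (hincl (hface false i a)) w = del w i).
  rewrite (_ : hincl (hface false i a) = hface true i a); first exact: bangS_faces.
  by apply: hom_eq.
move=> PK HK.
exists (bangS s0); split; first exact: bangS_faces.
split; first exact: bangS_syms.
exists (fun n w => w); split.
- have key : forall m n f, gen false m n f -> forall (H : gen false m n f) (H' : gen true m n f) x,
      act PK (exist _ f H) x = act (bangS s0) (exist _ f H') x.
    move=> m n f G; elim: G => [|n' i a f0 G0 IH|n' i f0 hs]; last done.
    + move=> H H' x.
      rewrite (_ : exist _ _ H = hid false m); last by apply: hom_eq.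
      rewrite (_ : exist _ _ H' = hid true m); last by apply: hom_eq.
      by rewrite !act_id.
    + move=> H H' x.
      rewrite (_ : exist _ _ H = hcomp (exist _ f0 G0) (hface false i a)); last by apply: hom_eq.
      rewrite (_ : exist _ _ H' = hcomp (exist _ f0 (gen_incl G0)) (hface true i a)); last by apply: hom_eq.
      by rewrite !act_comp HK bangS_faces; apply: IH.
  move=> m n [f Hf] x; exact: key.
- move=> p Hp u v Hu Hv Hag.
  have Ep : u p (hid true p) = v p (hid true p).
    move: u v Hu Hv Hag; case: p Hp => [|[|q]] //= _ u v Hu Hv Hag.
    apply: del_inj => i.
    have E1 : u q.+1 (hcomp (@hface true q.+1 i false) (hid true q.+2)) = del (u q.+2 (hid true q.+2)) i.
      by rewrite -(bangS_faces s0 i false); apply: Hu.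
    have E2 : v q.+1 (hcomp (@hface true q.+1 i false) (hid true q.+2)) = del (v q.+2 (hid true q.+2)) i.
      by rewrite -(bangS_faces s0 i false); apply: Hv.
    by rewrite -E1 -E2; apply: Hag.
  have E : u = v.
    apply: functional_extensionality_dep => n; apply: functional_extensionality_dep => f.
    have U := Hu n p f (hid true p); have V := Hv n p f (hid true p).
    have e : act (yon p) f (hid true p) = f by apply: hom_eq.
    by rewrite e in U V; rewrite U V Ep.
  exists u; split; first by split.
  by move=> w [_ [-> _]].
- move=> Y PY HY g Hg.
  have Fc : forall n (i : 'I_n.+1) a x,
      g n (act (bangS s0) (@hface true n i a) x) = act PY (@hface true n i a) (g n.+1 x).
    move=> n i a x; rewrite bangS_faces -(HK n i a x) Hg /=.
    by congr (act PY _ _); apply: hom_eq.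
  have Sy : forall n (i : 'I_n.+1) x,
      g n.+2 (act (bangS s0) (@hsym n i) x) = act PY (@hsym n i) (g n.+2 x).
    elim/ltn_ind => n IHn i x.
    set y1 := g n.+2 _; set y2 := act PY _ _.
    have Hs := HY n.+2 isT (fun k f => act PY f y1) (fun k f => act PY f y2).
    have Hag : forall k (f : hom true k n.+2), k < n.+2 -> act PY f y1 = act PY f y2.
      move=> k f Hk.
      have [j [a [f' ->]]] := hfact f Hk.
      rewrite !act_comp; congr (act PY f' _).
      have [j' [H [QH E]]] := @comm_hom n i j a
          (fun q H => forall z, g q (act (bangS s0) H z) = act PY H (g q z))
          ltac:(by move=> z; rewrite !act_id)
          ltac:(by move=> q i' e z; apply: IHn; lia).
      transitivity (g n.+1 (act (bangS s0) (hcomp (@hface true n.+1 j a) (@hsym n i)) x)).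
        by rewrite act_comp Fc.
      transitivity (act PY (hcomp (@hface true n.+1 j a) (@hsym n i)) (g n.+2 x)); last first.
        by rewrite act_comp.
      by rewrite E !act_comp QH Fc.
    have [w [[_ [e1 e2]] _]] := Hs
      ltac:(by move=> k l f h /=; apply: act_comp)
      ltac:(by move=> k l f h /=; apply: act_comp) Hag.
    have := f_equal (fun F => F n.+2 (hid true n.+2)) (etrans (esym e1) e2).
    by rewrite /= !act_id.
  have key : forall m n f, gen true m n f -> forall (H : gen true m n f) x,
      g m (act (bangS s0) (exist _ f H) x) = act PY (exist _ f H) (g n x).
    move=> m n f G; elim: G => [|n' i a f0 G0 IH|n' i f0 hs G0 IH] H x.
    + rewrite (_ : exist _ _ H = hid true m); last by apply: hom_eq.
      by rewrite !act_id.
    + rewrite (_ : exist _ _ H = hcomp (exist _ f0 G0) (@hface true n' i a)); last by apply: hom_eq.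
      by rewrite !act_comp IH Fc.
    + rewrite (_ : exist _ _ H = hcomp (exist _ f0 G0) (@hsym n' i)); last by apply: hom_eq.
      by rewrite !act_comp IH Sy.
  exists g; split.
    by split=> // m n [f H] x; apply: key.
  move=> h [_ Eh]; apply: functional_extensionality_dep => n.
  by apply: functional_extensionality => x; rewrite Eh.
Qed.
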